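(* Fix $N\ge3$ and $\lambda>0$, and let $\underline F(1)$ be defined (as a function of $p\in[0,1)$) by the recursion in the context. Then, as $p\downarrow0$, $$\underline F(1)=F_0(1)-\lambda^{-1}(N-1)\,p+o(p),$$ where $F_0(1)=\sum_{i=1}^{N-1}\frac{1}{\lambda i(N-i)}=\frac{2}{\lambda N}H_{N-1}$ and $H_n=\sum_{k=1}^n 1/k$.
   Context: For $N\ge3$, $\lambda>0$, $p\in[0,1)$: set $\underline F(N)=0$ and, for $i=N-1,\dots,1$, $\underline F(i)=(1-p)^{i(N-i)}\big[\frac{1}{\lambda i(N-i)}+\underline F(i+1)\big]+\sum_{c=1}^{N-i-1}\binom{N-i}{c}[1-(1-p)^i]^c(1-p)^{i(N-i-c)}\underline F(i+c)$. This is the paper's lower bound on the expected flooding time of an $N$-node network with ON/OFF edges (stationary ON probability $p$, exponential OFF periods of mean $\lambda^{-1}$, instantaneous transmission over ON edges). *)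

(* Defs.v *)
From Stdlib Require Import Reals Lra Lia List.
Open Scope R_scope.

Definition lsum (l : list nat) (g : nat -> R) : R :=
  fold_right (fun c acc => g c + acc) 0 l.

(* Fuel-driven evaluation of the lower-bound recursion.
   Flow_aux N lam p fuel i computes F_(i) provided fuel >= N - i;
   F_(j) = 0 for j >= N. *)
Fixpoint Flow_aux (N : nat) (lam p : R) (fuel i : nat) {struct fuel} : R :=
  match fuel with
  | O => 0
  | S f =>
      if (N <=? i)%nat then 0 else
      (1 - p) ^ (i * (N - i)) *
        (/ (lam * INR i * INR (N - i)) + Flow_aux N lam p f (i + 1))
      + lsum (seq 1 (N - i - 1))
          (fun c => C (N - i) c * (1 - (1 - p) ^ i) ^ c
                    * (1 - p) ^ (i * (N - i - c))
                    * Flow_aux N lam p f (i + c))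
  end.

Definition Flow (N : nat) (lam p : R) (i : nat) : R :=
  Flow_aux N lam p (N - i) i.

Definition F0_1 (N : nat) (lam : R) : R :=
  lsum (seq 1 (N - 1)) (fun i => / (lam * INR i * INR (N - i))).

(* Main.v *)
Require Import Defs.
From Stdlib Require Import Reals Lra Lia List.
Open Scope R_scope.

Definition approx (f : R -> R) (A B : R) := exists K, 0 <= K /\
  forall p, 0 <= p <= 1 -> Rabs (f p - (A + B * p)) <= K * p ^ 2.

Lemma approx_eqAB f A B A' B' : approx f A B -> A = A' -> B = B' -> approx f A' B'.
Proof. intros H -> ->; exact H. Qed.

Lemma approx_const a : approx (fun _ => a) a 0.
Proof. exists 0; split; [lra|]. intros p Hp.
  replace (a - (a + 0 * p)) with 0 by ring. rewrite Rabs_R0. lra. Qed.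

Lemma approx_id : approx (fun p => p) 0 1.
Proof. exists 0; split; [lra|]. intros p Hp.
  replace (p - (0 + 1 * p)) with 0 by ring. rewrite Rabs_R0. lra. Qed.

Lemma approx_plus f g A B C D : approx f A B -> approx g C D ->
  approx (fun p => f p + g p) (A + C) (B + D).
Proof. intros [K1 [HK1 H1]] [K2 [HK2 H2]]. exists (K1 + K2); split; [lra|].
  intros p Hp. specialize (H1 p Hp). specialize (H2 p Hp).
  replace (f p + g p - (A + C + (B + D) * p)) with
    ((f p - (A + B * p)) + (g p - (C + D * p))) by ring.
  eapply Rle_trans; [apply Rabs_triang|]. lra. Qed.

Lemma approx_sub f g A B C D : approx f A B -> approx g C D ->
  approx (fun p => f p - g p) (A - C) (B - D).
Proof. intros [K1 [HK1 H1]] [K2 [HK2 H2]]. exists (K1 + K2); split; [lra|].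
  intros p Hp. specialize (H1 p Hp). specialize (H2 p Hp).
  replace (f p - g p - (A - C + (B - D) * p)) with
    ((f p - (A + B * p)) + - (g p - (C + D * p))) by ring.
  eapply Rle_trans; [apply Rabs_triang|]. rewrite Rabs_Ropp. lra. Qed.

Lemma mult_bound A B C D K1 K2 p e1 e2 : 0 <= p <= 1 -> 0 <= K1 -> 0 <= K2 ->
  Rabs e1 <= K1 * p ^ 2 -> Rabs e2 <= K2 * p ^ 2 ->
  Rabs (B * D * p ^ 2 + (A + B * p) * e2 + e1 * (C + D * p) + e1 * e2)
  <= (Rabs B * Rabs D + (Rabs A + Rabs B) * K2 + K1 * (Rabs C + Rabs D) + K1 * K2) * p ^ 2.
Proof.
  intros Hp HK1 HK2 H1 H2.
  assert (Hp2 : 0 <= p ^ 2) by nra.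
  assert (Hp21 : p ^ 2 <= 1) by nra.
  assert (HA : Rabs (A + B * p) <= Rabs A + Rabs B).
  { eapply Rle_trans; [apply Rabs_triang|]. rewrite Rabs_mult, (Rabs_right p) by lra.
    pose proof (Rabs_pos B). nra. }
  assert (HC : Rabs (C + D * p) <= Rabs C + Rabs D).
  { eapply Rle_trans; [apply Rabs_triang|]. rewrite Rabs_mult, (Rabs_right p) by lra.
    pose proof (Rabs_pos D). nra. }
  assert (T1 : Rabs (B * D * p ^ 2) = Rabs B * Rabs D * p ^ 2).
  { rewrite !Rabs_mult, (Rabs_right (p^2)) by lra. ring. }
  assert (T2 : Rabs ((A + B * p) * e2) <= (Rabs A + Rabs B) * K2 * p ^ 2).
  { rewrite Rabs_mult. pose proof (Rabs_pos (A + B*p)). pose proof (Rabs_pos e2).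
    rewrite Rmult_assoc. apply Rmult_le_compat; auto. }
  assert (T3 : Rabs (e1 * (C + D * p)) <= K1 * (Rabs C + Rabs D) * p ^ 2).
  { rewrite Rabs_mult. pose proof (Rabs_pos (C + D*p)). pose proof (Rabs_pos e1).
    replace (K1 * (Rabs C + Rabs D) * p ^ 2) with ((K1 * p^2) * (Rabs C + Rabs D)) by ring.
    apply Rmult_le_compat; auto. }
  assert (T4 : Rabs (e1 * e2) <= K1 * K2 * p ^ 2).
  { rewrite Rabs_mult. pose proof (Rabs_pos e1). pose proof (Rabs_pos e2).
    apply Rle_trans with ((K1 * p^2) * (K2 * p^2)).
    - apply Rmult_le_compat; auto.
    - assert (0 <= K1 * K2) by (apply Rmult_le_pos; auto).
      replace (K1 * p ^ 2 * (K2 * p ^ 2)) with ((K1 * K2 * p ^ 2) * p ^ 2) by ring.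
      assert (H4 : 0 <= K1 * K2 * p ^ 2) by (apply Rmult_le_pos; auto).
      pose proof (Rmult_le_compat_l _ _ _ H4 Hp21). lra. }
  eapply Rle_trans; [apply Rabs_triang|].
  eapply Rle_trans; [apply Rplus_le_compat_r, Rabs_triang|].
  eapply Rle_trans; [apply Rplus_le_compat_r, Rplus_le_compat_r, Rabs_triang|].
  lra.
Qed.

Lemma approx_mult f g A B C D : approx f A B -> approx g C D ->
  approx (fun p => f p * g p) (A * C) (A * D + B * C).
Proof. intros [K1 [HK1 H1]] [K2 [HK2 H2]].
  exists (Rabs B * Rabs D + (Rabs A + Rabs B) * K2 + K1 * (Rabs C + Rabs D) + K1 * K2).
  split.
  { pose proof (Rabs_pos A). pose proof (Rabs_pos B). pose proof (Rabs_pos C).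
    pose proof (Rabs_pos D). assert (0 <= Rabs B * Rabs D) by nra.
    assert (0 <= (Rabs A + Rabs B) * K2) by nra. assert (0 <= K1 * (Rabs C + Rabs D)) by nra.
    assert (0 <= K1 * K2) by nra. lra. }
  intros p Hp. specialize (H1 p Hp). specialize (H2 p Hp).
  replace (f p * g p - (A * C + (A * D + B * C) * p)) with
    (B * D * p ^ 2 + (A + B * p) * (g p - (C + D * p)) + (f p - (A + B * p)) * (C + D * p)
     + (f p - (A + B * p)) * (g p - (C + D * p))) by ring.
  apply mult_bound; auto.
Qed.

Lemma approx_pow f A B n : approx f A B ->
  approx (fun p => f p ^ n) (A ^ n) (INR n * A ^ (n - 1) * B).
Proof. intros H. induction n as [|n IH].
  - simpl. eapply approx_eqAB; [apply approx_const| |]; simpl; ring.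
  - simpl pow. eapply approx_eqAB; [apply (approx_mult _ _ _ _ _ _ H IH)| reflexivity |].
    destruct n as [|m].
    + simpl. ring.
    + rewrite S_INR. replace (S (S m) - 1)%nat with (S m) by lia.
      replace (S m - 1)%nat with m by lia. simpl pow. rewrite !S_INR. ring.
Qed.

Lemma approx_lsum l (g : R -> nat -> R) (A B : nat -> R) :
  (forall c, In c l -> approx (fun p => g p c) (A c) (B c)) ->
  approx (fun p => lsum l (g p)) (lsum l A) (lsum l B).
Proof. induction l as [|x l IH]; intros H.
  - simpl. eapply approx_eqAB; [apply approx_const|reflexivity|reflexivity].
  - simpl. apply approx_plus.
    + apply H; simpl; auto.
    + apply IH; intros c Hc; apply H; simpl; auto.
Qed.

Lemma lsum_zero l g : (forall c, In c l -> g c = 0) -> lsum l g = 0.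
Proof. induction l as [|x l IH]; intros H; simpl; [reflexivity|].
  rewrite H by (simpl; auto). rewrite IH by (intros; apply H; simpl; auto). ring. Qed.

Lemma C_n_1 n : (1 <= n)%nat -> C n 1 = INR n.
Proof. intros Hn. unfold C. destruct n as [|m]; [lia|].
  replace (S m - 1)%nat with m by lia. rewrite fact_simpl, mult_INR.
  assert (INR (Factorial.fact m) <> 0) by (apply not_0_INR, Factorial.fact_neq_0).
  replace (INR (Factorial.fact 1)) with 1 by reflexivity. field; auto. Qed.

Definition F0 (N : nat) (lam : R) (i : nat) : R :=
  lsum (seq i (N - i)) (fun j => / (lam * INR j * INR (N - j))).

Lemma main_approx N lam : 0 < lam -> forall fuel i, (1 <= i)%nat -> (N - i <= fuel)%nat ->
  approx (fun p => Flow_aux N lam p fuel i) (F0 N lam i) (- INR (N - i) / lam).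
Proof.
  intros Hlam fuel. induction fuel as [|f IH]; intros i Hi Hf.
  - simpl. unfold F0. replace (N - i)%nat with 0%nat by lia. simpl.
    eapply approx_eqAB; [apply approx_const|reflexivity|field; lra].
  - cbn [Flow_aux]. destruct (N <=? i)%nat eqn:E.
    + apply Nat.leb_le in E. unfold F0. replace (N - i)%nat with 0%nat by lia. simpl.
      eapply approx_eqAB; [apply approx_const|reflexivity|field; lra].
    + apply Nat.leb_gt in E.
      assert (Y : approx (fun p => 1 - p) 1 (-1)).
      { eapply approx_eqAB; [apply (approx_sub _ _ _ _ _ _ (approx_const 1) approx_id)|ring|ring]. }
      eapply approx_eqAB.
      apply approx_plus. apply approx_mult.
      apply (approx_pow _ _ _ (i * (N - i)) Y).
      apply approx_plus. apply approx_const. apply IH; lia.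
      apply approx_lsum with
        (A := fun _ => 0)
        (B := fun c => C (N - i) c * (INR c * 0 ^ (c - 1) * INR i) * F0 N lam (i + c)).
      { intros c Hc. apply in_seq in Hc.
        assert (X : approx (fun p => 1 - (1 - p) ^ i) 0 (INR i)).
        { eapply approx_eqAB; [apply (approx_sub _ _ _ _ _ _ (approx_const 1) (approx_pow _ _ _ i Y))|
            rewrite pow1; ring| rewrite pow1; ring]. }
        eapply approx_eqAB.
        apply approx_mult. apply approx_mult. apply approx_mult.
        apply approx_const. apply (approx_pow _ _ _ c X).
        apply (approx_pow _ _ _ (i * (N - i - c)) Y).
        apply IH; lia.
        - rewrite pow_i by lia. ring.
        - rewrite pow_i by lia. rewrite !pow1. ring. }
      *
        rewrite lsum_zero by auto. rewrite pow1. unfold F0.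
        replace (N - i)%nat with (S (N - (i + 1))) by lia. simpl seq.
        replace (N - (i + 1))%nat with (N - S i)%nat by lia. simpl lsum.
        replace (i + 1)%nat with (S i) by lia. replace (S (N - S i)) with (N - i)%nat by lia. ring.
      *
        assert (HS : lsum (seq 1 (N - i - 1))
          (fun c => C (N - i) c * (INR c * 0 ^ (c - 1) * INR i) * F0 N lam (i + c))
          = INR (N - i) * INR i * F0 N lam (i + 1)).
        { destruct (N - i - 1)%nat as [|m] eqn:Em.
          - simpl. unfold F0. replace (N - (i + 1))%nat with 0%nat by lia. simpl. ring.
          - simpl seq. simpl lsum. rewrite lsum_zero.
            + rewrite C_n_1 by lia. simpl. ring.
            + intros c Hc. apply in_seq in Hc. rewrite pow_i by lia. ring. }
        rewrite HS, pow1.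
        assert (Hi0 : INR i <> 0) by (apply not_0_INR; lia).
        assert (HNi : INR (N - i) <> 0) by (apply not_0_INR; lia).
        replace (N - (i + 1))%nat with (N - i - 1)%nat by lia.
        rewrite minus_INR by lia. rewrite mult_INR. simpl (INR 1). rewrite !pow1. field. lra.
Qed.

Theorem lemma2 (N : nat) (lam : R) :
  (3 <= N)%nat -> 0 < lam ->
  forall eps : R, 0 < eps ->
  exists delta : R, 0 < delta /\
    forall p : R, 0 < p -> p < 1 -> p < delta ->
      Rabs (Flow N lam p 1 - (F0_1 N lam - / lam * INR (N - 1) * p)) <= eps * p.
Proof.
  intros HN Hlam eps Heps.
  destruct (main_approx N lam Hlam (N - 1) 1 ltac:(lia) ltac:(lia)) as [K [HK H]].
  exists (eps / (K + 1)). split.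
  { apply Rdiv_lt_0_compat; lra. }
  intros p Hp0 Hp1 Hd. specialize (H p ltac:(lra)).
  unfold Flow. replace (F0_1 N lam - / lam * INR (N - 1) * p) with
    (F0 N lam 1 + - INR (N - 1) / lam * p) by (unfold F0, F0_1; field; lra).
  eapply Rle_trans; [exact H|].
  assert (Hd' : p * (K + 1) < eps).
  { apply Rmult_lt_compat_r with (r := K + 1) in Hd; [|lra].
    unfold Rdiv in Hd. rewrite Rmult_assoc, Rinv_l in Hd by lra. lra. }
  nra.
Qed.
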